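(* Let $G$ be a $B_2$-EPG graph given with a representation, let $a$ be a row, and let $X$ be a nonempty clique of $G$ consisting only of U-vertices, all with index $\{a\}$. Then there is a set $S_t$ of at most three typed intervals such that: (1) $S_t$ contains exactly one horizontal typed interval (on row $a$) and at most two vertical typed intervals; (2) every vertex of $X$ contains every typed interval of $S_t$; (3) a Z-vertex $u$ is adjacent to every vertex of $X$ if and only if $u$ intersects at least one of the typed intervals of $S_t$.
   Context: A graph $G$ is a $B_k$-EPG graph if each vertex $u$ can be assigned a path $P_u$ in the planar orthogonal grid with at most $k$ bends such that $uv\in E(G)$ iff $P_u$ and $P_v$ share at least one grid edge (a representation); for $B_2$-EPG graphs one assumes w.l.o.g. every path has exactly two bends. A vertex $u$ intersects a row (column) if $P_u$ contains a grid edge of it; the index of $u$ is the set of rows it intersects. A Z-vertex intersects exactly two rows and one column; a U-vertex intersects exactly one row and two columns. If $a$ is in the index of $u$, $P_u^a$ is the segment of row $a$ between the two points of row $a$ where $P_u$ stops or bends. Types: $\emptyset$, $\mathsf d$, $\mathsf u$. A typed interval on row $a$ is $[x\alpha, y\beta]$ with $\alpha\le\beta$ points of row $a$ and $x,y$ types. For typed intervals $t=[x\alpha,y\beta]$, $t'=[x'\alpha',y'\beta']$ on row $a$ and an endpoint $z\gamma\in\{x'\alpha',y'\beta'\}$ of $t'$, $t$ is coherent with $z\gamma$ if (i) $\gamma\in(\alpha,\beta)$ (open interval), or (ii) $z=\emptyset$ and $[\alpha,\beta]$ contains the grid edge of $[\alpha',\beta']$ incident to $\gamma$, or (iii) $z\neq\emptyset$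 and $z\gamma\in\{x\alpha,y\beta\}$. $t$ contains $t'$ if $[\alpha',\beta']\subseteq[\alpha,\beta]$ and $t$ is coherent with both endpoints of $t'$. $t$ intersects $t'$ if $[\alpha,\beta]\cap[\alpha',\beta']$ contains a grid edge, or $t$ is coherent with an endpoint of $t'$, or $t'$ is coherent with an endpoint of $t$. The t-projection of $u$ on $a$ is $[x\alpha,y\beta]$ where $\alpha,\beta$ are the endpoints of $P_u^a$ and the type of an endpoint $\gamma$ is $\emptyset$ if $P_u$ ends at $\gamma$, $\mathsf d$ if $P_u$ bends downwards at $\gamma$, $\mathsf u$ if upwards. A vertex $u$ contains (intersects) a typed interval $t$ on row $a$ if $a$ is in the index of $u$ and its t-projection on $a$ contains (intersects) $t$. Typed intervals on rows are called horizontal typed intervals. Vertical typed intervals (on a column), the t-projection of a vertex on a column it intersects, and containment/intersection of vertical typed intervals by vertices are defined identically after rotating the grid by $90^\circ$ (columns becoming rows). *)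

(* Defs.v *)
From HB Require Import structures.
From mathcomp Require Import all_boot all_order all_algebra.
Set Implicit Arguments. Unset Strict Implicit. Unset Printing Implicit Defensive.
Import Order.TTheory GRing.Theory Num.Theory.
Local Open Scope ring_scope.

(* A grid point (x, y): x = column, y = row (y grows upwards). *)
Definition point := (int * int)%type.

Inductive orient := Hor | Ver.
Definition is_hor (o : orient) : bool := if o is Hor then true else false.
Definition is_ver (o : orient) : bool := if o is Ver then true else false.

Definition line (o : orient) (p : point) : int :=
  match o with Hor => p.2 | Ver => p.1 end.
Definition pos (o : orient) (p : point) : int :=
  match o with Hor => p.1 | Ver => p.2 end.

(* A path with (at most) two bends, given by its 4 corner points
   q0 (start), q1, q2 (bends), q3 (end). *)
Record path2 := Path2 { q0 : point; q1 : point; q2 : point; q3 : point }.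
Definition pt (P : path2) (i : nat) : point :=
  match i with 0 => q0 P | 1 => q1 P | 2 => q2 P | _ => q3 P end.

Definition along (o : orient) (p q : point) : Prop :=
  line o p = line o q /\ pos o p <> pos o q.

Definition two_bend_path (P : path2) : Prop :=
  (forall i, (i < 3)%N -> exists o, along o (pt P i) (pt P i.+1)) /\
  (forall i o, (i < 2)%N -> along o (pt P i) (pt P i.+1) ->
               ~ along o (pt P i.+1) (pt P i.+2)).

(* Grid edges: the unit segment on line ge_line (orientation ge_or)
   between positions ge_pos and ge_pos + 1. *)
Record gedge := GEdge { ge_or : orient; ge_line : int; ge_pos : int }.

Definition seg_has_edge (p q : point) (e : gedge) : Prop :=
  along (ge_or e) p q /\ line (ge_or e) p = ge_line e /\
  ((pos (ge_or e) p <= ge_pos e /\ ge_pos e + 1 <= pos (ge_or e) q) \/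
   (pos (ge_or e) q <= ge_pos e /\ ge_pos e + 1 <= pos (ge_or e) p)).

Definition path_has_edge (P : path2) (e : gedge) : Prop :=
  exists i, (i < 3)%N /\ seg_has_edge (pt P i) (pt P i.+1) e.

Definition share (P Q : path2) : Prop :=
  exists e, path_has_edge P e /\ path_has_edge Q e.

Definition intersects_line (P : path2) (o : orient) (a : int) : Prop :=
  exists e, ge_or e = o /\ ge_line e = a /\ path_has_edge P e.

Definition exactly_one_line (P : path2) (o : orient) : Prop :=
  exists a, forall r, intersects_line P o r <-> r = a.
Definition exactly_two_lines (P : path2) (o : orient) : Prop :=
  exists a b, a <> b /\ forall r, intersects_line P o r <-> (r = a \/ r = b).

Definition Z_vertex (P : path2) : Prop :=
  exactly_two_lines P Hor /\ exactly_one_line P Ver.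
Definition U_vertex (P : path2) : Prop :=
  exactly_one_line P Hor /\ exactly_two_lines P Ver.

Definition index_is_single (P : path2) (a : int) : Prop :=
  forall r, intersects_line P Hor r <-> r = a.

(* Types: TE = empty type, TD = d, TU = u. *)
Inductive ttype := TE | TD | TU.

(* A typed interval [x alpha, y beta] on line ti_line of orientation ti_or. *)
Record tinterval := TI {
  ti_or : orient; ti_line : int;
  ti_a : int; ti_x : ttype;
  ti_b : int; ti_y : ttype }.

Definition ti_wf (t : tinterval) : Prop := ti_a t <= ti_b t.

Inductive side := Lft | Rgt.
Definition endpoint_pos (t : tinterval) (s : side) : int :=
  match s with Lft => ti_a t | Rgt => ti_b t end.
Definition endpoint_type (t : tinterval) (s : side) : ttype :=
  match s with Lft => ti_x t | Rgt => ti_y t end.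

Definition coherent (t t' : tinterval) (s : side) : Prop :=
  let g := endpoint_pos t' s in
  let z := endpoint_type t' s in
  (ti_a t < g /\ g < ti_b t) \/
  (z = TE /\ ti_a t' < ti_b t' /\
     (* the grid edge of [alpha', beta'] incident to g lies in [alpha, beta] *)
     match s with
     | Lft => ti_a t <= g /\ g + 1 <= ti_b t
     | Rgt => ti_a t <= g - 1 /\ g <= ti_b t
     end) \/
  (z <> TE /\ ((z = ti_x t /\ g = ti_a t) \/ (z = ti_y t /\ g = ti_b t))).

Definition same_line (t t' : tinterval) : Prop :=
  ti_or t = ti_or t' /\ ti_line t = ti_line t'.

Definition ti_contains (t t' : tinterval) : Prop :=
  same_line t t' /\ ti_a t <= ti_a t' /\ ti_b t' <= ti_b t /\
  coherent t t' Lft /\ coherent t t' Rgt.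

Definition ti_intersects (t t' : tinterval) : Prop :=
  same_line t t' /\
  ((exists g, ti_a t <= g /\ ti_a t' <= g /\ g + 1 <= ti_b t /\ g + 1 <= ti_b t') \/
   (exists s, coherent t t' s) \/ (exists s, coherent t' t s)).

Definition bend_type (o : orient) (q r : point) : ttype :=
  if line o r < line o q then TD else TU.
Definition start_type (P : path2) (i : nat) (o : orient) : ttype :=
  if i is k.+1 then bend_type o (pt P i) (pt P k) else TE.
Definition end_type (P : path2) (i : nat) (o : orient) : ttype :=
  if i.+1 == 3%N then TE else bend_type o (pt P i.+1) (pt P i.+2).

Definition tproj (P : path2) (o : orient) (a : int) (t : tinterval) : Prop :=
  exists i, (i < 3)%N /\ along o (pt P i) (pt P i.+1) /\ line o (pt P i) = a /\
    t = (if pos o (pt P i) < pos o (pt P i.+1)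
         then TI o a (pos o (pt P i)) (start_type P i o)
                     (pos o (pt P i.+1)) (end_type P i o)
         else TI o a (pos o (pt P i.+1)) (end_type P i o)
                     (pos o (pt P i)) (start_type P i o)).

Definition v_contains (P : path2) (t : tinterval) : Prop :=
  intersects_line P (ti_or t) (ti_line t) /\
  exists tp, tproj P (ti_or t) (ti_line t) tp /\ ti_contains tp t.
Definition v_intersects (P : path2) (t : tinterval) : Prop :=
  intersects_line P (ti_or t) (ti_line t) /\
  exists tp, tproj P (ti_or t) (ti_line t) tp /\ ti_intersects tp t.

(* Main.v *)
Require Import Defs.
From HB Require Import structures.
From mathcomp Require Import all_boot all_order all_algebra zify.
Set Implicit Arguments. Unset Strict Implicit. Unset Printing Implicit Defensive.
Import Order.TTheory GRing.Theory Num.Theory.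
From Stdlib Require List.
From Stdlib Require Import Classical.
Open Scope ring_scope.



Ltac gfin aT bT aT' bT' ct dt :=
  simpl in *; left; first
  [ exists aT; lia | exists (aT-1); lia | exists bT; lia | exists (bT-1); lia
  | exists aT'; lia | exists (aT'-1); lia | exists bT'; lia | exists (bT'-1); lia
  | exists ct; lia | exists (ct-1); lia | exists dt; lia | exists (dt-1); lia ].

Ltac rfin := simpl in *; subst; right; first
  [ exists Lft, Lft; simpl; done | exists Lft, Rgt; simpl; done
  | exists Rgt, Lft; simpl; done | exists Rgt, Rgt; simpl; done ].

Lemma core1d (T T' t : tinterval) :
 ti_a T < ti_b T -> ti_a T' < ti_b T' ->
 ti_a T <= ti_a t -> ti_b t <= ti_b T -> coherent T t Lft -> coherent T t Rgt ->
 ti_intersects T' t ->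
 (exists g, ti_a T <= g /\ g + 1 <= ti_b T /\ ti_a T' <= g /\ g + 1 <= ti_b T') \/
 (exists s s', endpoint_pos T s = endpoint_pos T' s' /\
    endpoint_type T s = endpoint_type T' s' /\ endpoint_type T s <> TE).
Proof.
case: T => oT kT aT xT bT yT; case: T' => oT' kT' aT' xT' bT' yT';
case: t => o k ct x dt y /=.
move=> h1 h2 h3 h4 cL cR [_ I].
case: I => [[g ?]|[[[] C]|[[] C]]].
- simpl in *; left; exists g; lia.
-
  move: C; rewrite /coherent /=.
  case=> [?|[[? [? ?]]|[hz [[? ?]|[? ?]]]]].
  + move: cL; rewrite /coherent /=.
    case=> [?|[[? [? ?]]|[? [[? ?]|[? ?]]]]]; gfin aT bT aT' bT' ct dt.
  + gfin aT bT aT' bT' ct dt.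
  + subst. move: cL; rewrite /coherent /=.
    case=> [?|[[? [? ?]]|[? [[? ?]|[? ?]]]]]; try (by []); first [gfin aT bT aT' bT' ct dt | rfin].
  + subst. move: cL; rewrite /coherent /=.
    case=> [?|[[? [? ?]]|[? [[? ?]|[? ?]]]]]; try (by []); first [gfin aT bT aT' bT' ct dt | rfin].
- move: C; rewrite /coherent /=.
  case=> [?|[[? [? ?]]|[hz [[? ?]|[? ?]]]]].
  + move: cR; rewrite /coherent /=.
    case=> [?|[[? [? ?]]|[? [[? ?]|[? ?]]]]]; gfin aT bT aT' bT' ct dt.
  + gfin aT bT aT' bT' ct dt.
  + subst. move: cR; rewrite /coherent /=.
    case=> [?|[[? [? ?]]|[? [[? ?]|[? ?]]]]]; try (by []); first [gfin aT bT aT' bT' ct dt | rfin].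
  + subst. move: cR; rewrite /coherent /=.
    case=> [?|[[? [? ?]]|[? [[? ?]|[? ?]]]]]; try (by []); first [gfin aT bT aT' bT' ct dt | rfin].
-
  move: C; rewrite /coherent /=.
  case=> [?|[[? [? ?]]|[hz [[? ?]|[? ?]]]]].
  + gfin aT bT aT' bT' ct dt.
  + gfin aT bT aT' bT' ct dt.
  + subst. move: cL; rewrite /coherent /=.
    case=> [?|[[? [? ?]]|[? [[? ?]|[? ?]]]]]; try (by []); first [gfin aT bT aT' bT' ct dt | rfin].
  + subst. move: cR; rewrite /coherent /=.
    case=> [?|[[? [? ?]]|[? [[? ?]|[? ?]]]]]; try (by []); first [gfin aT bT aT' bT' ct dt | rfin].
- move: C; rewrite /coherent /=.
  case=> [?|[[? [? ?]]|[hz [[? ?]|[? ?]]]]].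
  + gfin aT bT aT' bT' ct dt.
  + gfin aT bT aT' bT' ct dt.
  + subst. move: cL; rewrite /coherent /=.
    case=> [?|[[? [? ?]]|[? [[? ?]|[? ?]]]]]; try (by []); first [gfin aT bT aT' bT' ct dt | rfin].
  + subst. move: cR; rewrite /coherent /=.
    case=> [?|[[? [? ?]]|[? [[? ?]|[? ?]]]]]; try (by []); first [gfin aT bT aT' bT' ct dt | rfin].
Qed.
Lemma ovl1d (T t : tinterval) : same_line T t -> ti_a T < ti_b T ->
  ti_a T < ti_b t -> ti_a t < ti_b T -> ti_a t <= ti_b t -> ti_intersects T t.
Proof.
case: T => oT kT aT xT bT yT; case: t => o k ct x dt y /= sl h1 h2 h3 h4.
split => //.
case: (ltrP ct dt) => h5.
- left; exists (Num.max aT ct) => /=; lia.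
- right; left; exists Lft; rewrite /coherent /=; left; lia.
Qed.

Definition flipo o := match o with Hor => Ver | Ver => Hor end.
Lemma line_flip o p : line (flipo o) p = pos o p. Proof. by case: o. Qed.
Lemma pos_flip o p : pos (flipo o) p = line o p. Proof. by case: o. Qed.
Lemma neq_flip o o' : o' <> o -> o' = flipo o.
Proof. by case: o; case: o'. Qed.

Definition segti (P : path2) (i : nat) (o : orient) (k : int) :=
  if pos o (pt P i) < pos o (pt P i.+1)
  then TI o k (pos o (pt P i)) (start_type P i o) (pos o (pt P i.+1)) (end_type P i o)
  else TI o k (pos o (pt P i.+1)) (end_type P i o) (pos o (pt P i)) (start_type P i o).

Lemma tprojE P o k T : tproj P o k T <->
  exists i, (i < 3)%N /\ along o (pt P i) (pt P i.+1) /\ line o (pt P i) = k /\ T = segti P i o k.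
Proof. by []. Qed.

Lemma segti_nd P i o k : along o (pt P i) (pt P i.+1) ->
  ti_or (segti P i o k) = o /\ ti_line (segti P i o k) = k /\
  ti_a (segti P i o k) < ti_b (segti P i o k).
Proof.
rewrite /segti; set p := pt P i; set q := pt P i.+1; move=> [_ h]; case: ltrP => h2; cbn [ti_a ti_b ti_or ti_line]; do 2 split => //; lia.
Qed.

Lemma tproj_nd P o k T : tproj P o k T -> ti_or T = o /\ ti_line T = k /\ ti_a T < ti_b T.
Proof. by case=> i [_ [hal [_ ->]]]; apply: segti_nd. Qed.

Lemma tproj_edge P o k T g : tproj P o k T -> ti_a T <= g -> g + 1 <= ti_b T ->
  path_has_edge P (GEdge o k g).
Proof.
case=> i [hi [hal [hl ->]]] h1 h2; exists i; split => //.
rewrite /seg_has_edge; cbn [ge_or ge_line ge_pos]; split => //; split => //.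
move: hal h1 h2; rewrite /segti; set p := pt P i; set q := pt P i.+1; move=> [_ hne]; case: ltrP => ?; cbn [ti_a ti_b] => h1 h2; [left|right]; lia.
Qed.

Lemma edge_tproj P o k g : path_has_edge P (GEdge o k g) ->
  exists T, tproj P o k T /\ ti_a T <= g /\ g + 1 <= ti_b T.
Proof.
case=> i [hi [hal [hl hr]]]; move: hal hl hr; cbn [ge_or ge_line ge_pos] => hal hl hr; exists (segti P i o k); split.
  by exists i.
move: hal hl hr; rewrite /segti; set p := pt P i; set q := pt P i.+1; move=> [_ hne] hl hr; case: ltrP => h; cbn [ti_a ti_b]; lia.
Qed.

Lemma tproj_il P o k T : tproj P o k T -> intersects_line P o k.
Proof.
move=> h; have [_ [_ hnd]] := tproj_nd h.
exists (GEdge o k (ti_a T)); do 2 split => //.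
apply: tproj_edge h _ _ => //; lia.
Qed.

Lemma bend_start P o j : two_bend_path P -> (j < 2)%N ->
  along o (pt P j.+1) (pt P j.+2) ->
  path_has_edge P (GEdge (flipo o) (pos o (pt P j.+1))
    (if bend_type o (pt P j.+1) (pt P j) is TU then line o (pt P j.+1)
     else line o (pt P j.+1) - 1)).
Proof.
move=> [h1 h2] hj hal.
have [o' ho'] := h1 j (ltn_trans hj (ltnSn 2)).
have ne : o' <> o.
  by move=> eo; subst o'; exact: (h2 j o hj ho' hal).
have eo := neq_flip ne; subst o'.
exists j; split; first by apply: ltn_trans hj _.
split => //=; split; first by move: ho' => [+ _]; rewrite !line_flip.
move: ho' => [_]; rewrite !pos_flip /bend_type.
case: ltrP => /= h hne; lia.
Qed.

Lemma bend_end P o i : two_bend_path P -> (i < 2)%N ->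
  along o (pt P i) (pt P i.+1) ->
  path_has_edge P (GEdge (flipo o) (pos o (pt P i.+1))
    (if bend_type o (pt P i.+1) (pt P i.+2) is TU then line o (pt P i.+1)
     else line o (pt P i.+1) - 1)).
Proof.
move=> [h1 h2] hi hal.
have [o' ho'] := h1 i.+1 hi.
have ne : o' <> o.
  by move=> eo; subst o'; exact: (h2 i o hi hal ho').
have eo := neq_flip ne; subst o'.
exists i.+1; split => //.
split => //=; split; first by rewrite line_flip.
move: ho' => [_]; rewrite !pos_flip /bend_type.
case: ltrP => /= h hne; lia.
Qed.

Lemma start_bend P o i k : two_bend_path P -> (i < 3)%N ->
  along o (pt P i) (pt P i.+1) -> line o (pt P i) = k -> start_type P i o <> TE ->
  path_has_edge P (GEdge (flipo o) (pos o (pt P i))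
    (if start_type P i o is TU then k else k - 1)).
Proof.
case: i => [//|j] hP hj hal hl _.
by rewrite -hl; apply: bend_start.
Qed.

Lemma end_bend P o i k : two_bend_path P -> (i < 3)%N ->
  along o (pt P i) (pt P i.+1) -> line o (pt P i) = k -> end_type P i o <> TE ->
  path_has_edge P (GEdge (flipo o) (pos o (pt P i.+1))
    (if end_type P i o is TU then k else k - 1)).
Proof.
move=> hP hi hal hl.
have hl' : line o (pt P i.+1) = k by move: hal => [<- _].
rewrite /end_type; case: eqP => [//|hne _].
have hi2 : (i < 2)%N by lia.
by rewrite -hl'; apply: bend_end.
Qed.

Lemma tproj_bend P o k T s : two_bend_path P -> tproj P o k T ->
  endpoint_type T s <> TE ->
  path_has_edge P (GEdge (flipo o) (endpoint_pos T s)
    (if endpoint_type T s is TU then k else k - 1)).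
Proof.
move=> hP [i [hi [hal [hl ->]]]].
have Hs := start_bend hP hi hal hl.
have He := end_bend hP hi hal hl.
by rewrite /segti; case: ltrP => _; case: s => /=.
Qed.

Lemma contains_inter_share P Q t : two_bend_path P -> two_bend_path Q ->
  v_contains P t -> v_intersects Q t -> share P Q.
Proof.
move=> hP hQ [_ [TP [hTP [_ [c1 [c2 [cL cR]]]]]]] [_ [TQ [hTQ iT]]].
have [_ [_ nP]] := tproj_nd hTP; have [_ [_ nQ]] := tproj_nd hTQ.
case: (core1d nP nQ c1 c2 cL cR iT) => [[g [g1 [g2 [g3 g4]]]]|[s [s' [e1 [e2 e3]]]]].
- exists (GEdge (ti_or t) (ti_line t) g); split.
  + exact: tproj_edge hTP g1 g2.
  + exact: tproj_edge hTQ g3 g4.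
- exists (GEdge (flipo (ti_or t)) (endpoint_pos TP s)
      (if endpoint_type TP s is TU then ti_line t else ti_line t - 1)); split.
  + exact: tproj_bend hP hTP e3.
  + rewrite e1 e2; apply: tproj_bend hQ hTQ _; by rewrite -e2.
Qed.

Lemma flipoK o : flipo (flipo o) = o. Proof. by case: o. Qed.

Lemma alt_or P : two_bend_path P -> exists o, along o (pt P 0) (pt P 1) /\
  along (flipo o) (pt P 1) (pt P 2) /\ along o (pt P 2) (pt P 3).
Proof.
move=> [h1 h2].
have [o0 a0] := h1 0%N erefl; have [o1 a1] := h1 1%N erefl; have [o2 a2] := h1 2%N erefl.
have n1 : o1 <> o0 by move=> e; subst; exact: (h2 0%N o0 erefl a0 a1).
have n2 : o2 <> o1 by move=> e; subst; exact: (h2 1%N o1 erefl a1 a2).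
have e1 := neq_flip n1; have e2 := neq_flip n2; subst.
by exists o0; rewrite flipoK in a2.
Qed.

Lemma along_il P o i : (i < 3)%N -> along o (pt P i) (pt P i.+1) ->
  intersects_line P o (line o (pt P i)).
Proof.
move=> hi hal; apply: (@tproj_il P o _ (segti P i o (line o (pt P i)))).
by exists i.
Qed.

Lemma Ushape_of P a : two_bend_path P -> index_is_single P a ->
  exists x1 x2 y0 y3, P = Path2 (x1,y0) (x1,a) (x2,a) (x2,y3) /\
    x1 <> x2 /\ y0 <> a /\ y3 <> a.
Proof.
move=> hP hI; have [o [a0 [a1 a2]]] := alt_or hP.
have i0 := along_il (i:=0) erefl a0; have i1 := along_il (i:=1) erefl a1;
have i2 := along_il (i:=2) erefl a2.
move: hP hI a0 a1 a2 i0 i1 i2; case: P => [[x0 y0] [x1 y1] [x2 y2] [x3 y3]] hP hI.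
case: o => /= [[e0 n0] [e1 n1] [e2 n2]|[e0 n0] [e1 n1] [e2 n2]] i0 i1 i2;
  rewrite /line /pos /= in e0 n0 e1 n1 e2 n2 i0 i1 i2.
- move/hI: i0 => /= ha; move/hI: i2 => /= hb. exfalso; lia.
- move/hI: i1 => /= ha.
  exists x1, x2, y0, y3; split; first by congr Path2; congr pair; lia.
  lia.
Qed.

Lemma Zshape_of P : two_bend_path P -> Z_vertex P ->
  exists x0 c x3 r1 r2, P = Path2 (x0,r1) (c,r1) (c,r2) (x3,r2) /\
    x0 <> c /\ x3 <> c /\ r1 <> r2.
Proof.
move=> hP [_ [c0 hI]]; have [o [a0 [a1 a2]]] := alt_or hP.
have i0 := along_il (i:=0) erefl a0; have i1 := along_il (i:=1) erefl a1;
have i2 := along_il (i:=2) erefl a2.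
move: hP hI a0 a1 a2 i0 i1 i2; case: P => [[x0 y0] [x1 y1] [x2 y2] [x3 y3]] hP hI.
case: o => /= [[e0 n0] [e1 n1] [e2 n2]|[e0 n0] [e1 n1] [e2 n2]] i0 i1 i2;
  rewrite /line /pos /= in e0 n0 e1 n1 e2 n2 i0 i1 i2.
- exists x0, x1, x3, y1, y3; split; first by congr Path2; congr pair; lia.
  lia.
- move/hI: i0 => /= ha; move/hI: i2 => /= hb. exfalso; lia.
Qed.



Definition TH P := segti P 1 Hor (q1 P).2.
Definition lU P := ti_a (TH P).
Definition rU P := ti_b (TH P).
Definition TV P c := if c == (q1 P).1 then segti P 0 Ver c else segti P 2 Ver c.

Ltac ucomp := unfold along, line, pos in *; simpl in *.

Definition Ush (P : path2) (a : int) := exists x1 x2 y0 y3,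
  P = Path2 (x1,y0) (x1,a) (x2,a) (x2,y3) /\ x1 <> x2 /\ y0 <> a /\ y3 <> a.

Lemma U1 P a k T : Ush P a -> (tproj P Hor k T <-> k = a /\ T = TH P).
Proof.
move=> [x1 [x2 [y0 [y3 [-> [n12 [n0 n3]]]]]]].
rewrite tprojE; split.
- case=> [[|[|[|i]]]] [hi [hal [hl ->]]] //; ucomp; try lia.
  by subst; split.
- case=> -> ->; exists 1%N; ucomp; do !split => //; lia.
Qed.

Lemma U2 P a k T : Ush P a -> (tproj P Ver k T <-> (k = lU P \/ k = rU P) /\ T = TV P k).
Proof.
move=> [x1 [x2 [y0 [y3 [-> [n12 [n0 n3]]]]]]].
have Hl : lU (Path2 (x1,y0) (x1,a) (x2,a) (x2,y3)) = Num.min x1 x2.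
  by rewrite /lU /TH /segti /=; case: ltrP => h /=; lia.
have Hr : rU (Path2 (x1,y0) (x1,a) (x2,a) (x2,y3)) = Num.max x1 x2.
  by rewrite /rU /TH /segti /=; case: ltrP => h /=; lia.
rewrite tprojE Hl Hr /TV /=; split.
- case=> [[|[|[|i]]]] [hi [hal [hl ->]]] //; ucomp; try lia.
  + subst k; rewrite eqxx; split => //; lia.
  + subst k; have -> : (x2 == x1) = false by apply/eqP => h; lia.
    split => //; lia.
- case=> hk ->; case: (x1 =P k) => [<-|hne].
  + rewrite eqxx; exists 0%N; ucomp; do !split => //; lia.
  + have -> : (k == x1) = false by apply/eqP => h; lia.
    exists 2%N; ucomp; do !split => //; lia.
Qed.

Ltac crunch := repeat (unfold TV, TH, lU, rU, segti, start_type, end_type, bend_type, line, pos; simpl; match goal with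
  | |- context [if ?x < ?y then _ else _] => case: (ltrP x y) => ?
  | |- context [?x == ?y :> int] => case: (x =P y) => ?
  end); simpl.
Ltac cfin := first [ exfalso; lia
  | left; do !split; first [reflexivity | lia]
  | right; do !split; first [reflexivity | lia]
  | do !split; first [reflexivity | lia]].

Lemma U3 P a : Ush P a -> ti_or (TH P) = Hor /\ ti_line (TH P) = a /\ lU P < rU P.
Proof.
move=> [x1 [x2 [y0 [y3 [-> [n12 [n0 n3]]]]]]].
rewrite /lU /rU /TH /segti /bend_type /start_type /end_type /=; crunch; cfin.
Qed.

Lemma U5 P a : Ush P a ->
  (ti_x (TH P) = TU /\ ti_a (TV P (lU P)) = a /\ ti_x (TV P (lU P)) = TU) \/
  (ti_x (TH P) = TD /\ ti_b (TV P (lU P)) = a /\ ti_y (TV P (lU P)) = TU).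
Proof.
move=> [x1 [x2 [y0 [y3 [-> [n12 [n0 n3]]]]]]].
rewrite /lU /TV /TH /segti /bend_type /start_type /end_type /=; crunch; cfin.
Qed.

Lemma U6 P a : Ush P a ->
  (ti_y (TH P) = TU /\ ti_a (TV P (rU P)) = a /\ ti_x (TV P (rU P)) = TD) \/
  (ti_y (TH P) = TD /\ ti_b (TV P (rU P)) = a /\ ti_y (TV P (rU P)) = TD).
Proof.
move=> [x1 [x2 [y0 [y3 [-> [n12 [n0 n3]]]]]]].
rewrite /rU /TV /TH /segti /bend_type /start_type /end_type /=; crunch; cfin.
Qed.

Ltac sp := first [ exfalso; lia | reflexivity | discriminate | lia
  | split; [sp|sp] | left; sp | right; sp ].

Definition cZ (P : path2) := (q1 P).1.
Definition TVz P := segti P 1 Ver (q1 P).1.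

Definition Zsh (P : path2) := exists x0 c x3 r1 r2,
  P = Path2 (x0,r1) (c,r1) (c,r2) (x3,r2) /\ x0 <> c /\ x3 <> c /\ r1 <> r2.

Lemma Z1 P k T : Zsh P -> (tproj P Ver k T <-> k = cZ P /\ T = TVz P).
Proof.
move=> [x0 [c [x3 [r1 [r2 [-> [n0 [n3 n12]]]]]]]].
rewrite tprojE; split.
- case=> [[|[|[|i]]]] [hi [hal [hl ->]]] //; ucomp; try lia.
  by subst; split.
- case=> -> ->; exists 1%N; ucomp; do !split => //; lia.
Qed.

Lemma Z2 P k T T' : Zsh P -> tproj P Hor k T -> tproj P Hor k T' -> T = T'.
Proof.
move=> [x0 [c [x3 [r1 [r2 [-> [n0 [n3 n12]]]]]]]].
rewrite !tprojE.
case=> [[|[|[|i]]]] [hi [hal [hl ->]]] //;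
case=> [[|[|[|j]]]] [hj [hal' [hl' ->]]] //; ucomp; lia.
Qed.

Lemma Z4 P a T : Zsh P -> tproj P Hor a T -> exists d, d <> TE /\
  ((ti_b T = cZ P /\ ti_y T = d /\ ti_x T = TE) \/
   (ti_a T = cZ P /\ ti_x T = d /\ ti_y T = TE)) /\
  ((d = TU /\ ti_a (TVz P) = a) \/ (d = TD /\ ti_b (TVz P) = a)).
Proof.
move=> [x0 [c [x3 [r1 [r2 [-> [n0 [n3 n12]]]]]]]].
rewrite !tprojE.
case=> [[|[|[|i]]]] [hi [hal [hl ->]]] //; ucomp; try lia.
- exists (if r2 < r1 then TD else TU); rewrite /cZ /TVz.
  crunch; subst; sp.
- exists (if r1 < r2 then TD else TU); rewrite /cZ /TVz.
  crunch; subst; sp.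
Qed.

Lemma Z5 P a : Zsh P -> ~ index_is_single P a.
Proof.
move=> [x0 [c [x3 [r1 [r2 [-> [n0 [n3 n12]]]]]]]] hI.
have h0 : along Hor (pt (Path2 (x0,r1) (c,r1) (c,r2) (x3,r2)) 0)
                    (pt (Path2 (x0,r1) (c,r1) (c,r2) (x3,r2)) 1) by ucomp; lia.
have h2 : along Hor (pt (Path2 (x0,r1) (c,r1) (c,r2) (x3,r2)) 2)
                    (pt (Path2 (x0,r1) (c,r1) (c,r2) (x3,r2)) 3) by ucomp; lia.
move/(along_il (i:=0) erefl)/hI: h0; move/(along_il (i:=2) erefl)/hI: h2.
rewrite /line /=; lia.
Qed.



Lemma argmax_seq (V : eqType) (s : seq V) (g : V -> int) : s <> [::] ->
  exists2 v, v \in s & forall w, w \in s -> g w <= g v.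
Proof.
elim: s => [//|x s IH] _.
case: s IH => [|y s] IH.
  by exists x => [|w]; rewrite ?inE // => /eqP ->.
have [v vs hv] := IH ltac:(done).
case: (lerP (g v) (g x)) => h.
- exists x; first by rewrite inE eqxx.
  move=> w; rewrite inE => /orP [/eqP -> //| /hv]; lia.
- exists v; first by rewrite inE vs orbT.
  move=> w; rewrite inE => /orP [/eqP ->| /hv //]; lia.
Qed.

Lemma argmax (V : finType) (X : {set V}) (g : V -> int) : X != set0 ->
  exists2 v, v \in X & forall w, w \in X -> g w <= g v.
Proof.
move=> hX.
have ne : enum X <> [::].
  move=> h; move/set0Pn: hX => [x hx].
  by move: (mem_enum X x); rewrite h hx.
have [v hv1 hv2] := argmax_seq g ne.
exists v; first by rewrite -mem_enum.
by move=> w hw; apply: hv2; rewrite mem_enum.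
Qed.

Lemma argmin (V : finType) (X : {set V}) (g : V -> int) : X != set0 ->
  exists2 v, v \in X & forall w, w \in X -> g v <= g w.
Proof.
move=> hX; have [v hv1 hv2] := argmax (fun v => - g v) hX.
by exists v => // w /hv2; lia.
Qed.

Lemma ti_family (V : finType) (X : {set V}) (f : V -> tinterval) o k :
  X != set0 ->
  (forall v, v \in X -> ti_or (f v) = o /\ ti_line (f v) = k /\ ti_a (f v) < ti_b (f v)) ->
  (forall v w, v \in X -> w \in X -> ti_a (f v) <= ti_b (f w)) ->
  (forall v w, v \in X -> w \in X -> ti_a (f v) = ti_b (f w) ->
     ti_x (f v) = ti_y (f w) /\ ti_x (f v) <> TE) ->
  exists t, ti_or t = o /\ ti_line t = k /\ ti_wf t /\
   (exists2 v1, v1 \in X & ti_a t = ti_a (f v1)) /\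
   (exists2 v2, v2 \in X & ti_b t = ti_b (f v2)) /\
   (forall v, v \in X -> ti_a (f v) <= ti_a t /\ ti_b t <= ti_b (f v)) /\
   (forall v, v \in X -> ti_contains (f v) t) /\
   (forall d, (forall v, v \in X -> ti_a (f v) = ti_a t -> ti_x (f v) = d) -> ti_x t = d) /\
   (forall d, (forall v, v \in X -> ti_b (f v) = ti_b t -> ti_y (f v) = d) -> ti_y t = d).
Proof.
move=> hX hf hpw hdeg.
have [v1 v1X hv1] := argmax (fun v => ti_a (f v)) hX.
have [v2 v2X hv2] := argmin (fun v => ti_b (f v)) hX.
set al := ti_a (f v1); set be := ti_b (f v2).
have albe : al <= be by apply: hpw.
pose Ux := forall v, v \in X -> ti_a (f v) = al -> ti_x (f v) = ti_x (f v1).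
pose Uy := forall v, v \in X -> ti_b (f v) = be -> ti_y (f v) = ti_y (f v2).
have [x [hx1 hx2]] : exists x, (Ux -> x = ti_x (f v1)) /\ (~ Ux -> x = TE).
  by case: (classic Ux) => h; [exists (ti_x (f v1))|exists TE]; split.
have [y [hy1 hy2]] : exists y, (Uy -> y = ti_y (f v2)) /\ (~ Uy -> y = TE).
  by case: (classic Uy) => h; [exists (ti_y (f v2))|exists TE]; split.
have degU : al = be -> Ux /\ Uy.
  move=> e; split.
  - move=> w wX hw; have [h1 _] := hdeg w v2 wX v2X (etrans hw e).
    have [h2 _] := hdeg v1 v2 v1X v2X e; by rewrite h1 h2.
  - move=> w wX hw; have [h1 _] := hdeg v1 w v1X wX (etrans e (esym hw)).
    have [h2 _] := hdeg v1 v2 v1X v2X e; by rewrite -h1 h2.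
have xnTE : x <> TE -> Ux.
  by move=> h; apply: NNPP => /hx2.
have ynTE : y <> TE -> Uy.
  by move=> h; apply: NNPP => /hy2.
exists (TI o k al x be y) => /=.
do 3 split => //.
split; first by exists v1.
split; first by exists v2.
split; first by move=> v vX; split; [apply: hv1|apply: hv2].
split.
- move=> v vX; have [ho [hk hnd]] := hf v vX.
  have l1 := hv1 v vX; have l2 := hv2 v vX.
  split; first by split.
  split => //=; split => //=.
  split; rewrite /coherent /=.
  + case: (ltrP (ti_a (f v)) al) => h1.
    * case: (ltrP al (ti_b (f v))) => h2; first by left; lia.
      have e1 : al = be by lia.
      have e2 : al = ti_b (f v) by lia.
      have [Ux' _] := degU e1.
      have [h3 h4] := hdeg v1 v v1X vX e2.
      right; right; rewrite hx1 //; split => //; right; split => //.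
    * have e : ti_a (f v) = al by lia.
      case: (classic (x = TE)) => hxe.
      - case: (ltrP al be) => h3.
        + right; left; split => //; lia.
        + have e1 : al = be by lia.
          have [Ux' _] := degU e1.
          have [_ h4] := hdeg v1 v2 v1X v2X e1.
          by exfalso; apply: h4; rewrite -(hx1 Ux').
      - right; right; split => //; left; split => //.
        by rewrite (hx1 (xnTE hxe)) (xnTE hxe v vX e).
  + case: (ltrP be (ti_b (f v))) => h1.
    * case: (ltrP (ti_a (f v)) be) => h2; first by left; lia.
      have e1 : al = be by lia.
      have e2 : ti_a (f v) = be by lia.
      have [_ Uy'] := degU e1.
      have [h3 h4] := hdeg v v2 vX v2X e2.
      right; right; rewrite hy1 //; split; first by rewrite -h3.
      left; split => //.
    * have e : ti_b (f v) = be by lia.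
      case: (classic (y = TE)) => hye.
      - case: (ltrP al be) => h3.
        + right; left; split => //; lia.
        + have e1 : al = be by lia.
          have [_ Uy'] := degU e1.
          have [h4 h5] := hdeg v1 v2 v1X v2X e1.
          by exfalso; apply: h5; rewrite h4 -(hy1 Uy').
      - right; right; split => //; right; split => //.
        by rewrite (hy1 (ynTE hye)) (ynTE hye v vX e).
split.
- move=> d hd; have Ux' : Ux by move=> w wX hw; rewrite (hd w wX hw) (hd v1 v1X erefl).
  by rewrite (hx1 Ux') (hd v1 v1X erefl).
- move=> d hd; have Uy' : Uy by move=> w wX hw; rewrite (hd w wX hw) (hd v2 v2X erefl).
  by rewrite (hy1 Uy') (hd v2 v2X erefl).
Qed.



Lemma UV_tproj P a c : Ush P a -> c = lU P \/ c = rU P -> tproj P Ver c (TV P c).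
Proof. by move=> hU hc; apply/(U2 _ _ hU). Qed.

Lemma UV_props P a c : Ush P a -> c = lU P \/ c = rU P ->
  ti_or (TV P c) = Ver /\ ti_line (TV P c) = c /\ ti_a (TV P c) < ti_b (TV P c) /\
  ti_a (TV P c) <= a /\ a <= ti_b (TV P c).
Proof.
move=> hU hc; have [h1 [h2 h3]] := tproj_nd (UV_tproj hU hc).
do 3 split => //.
case: hc h3 => -> h3.
- by case: (U5 hU) => [[_ [h _]]|[_ [h _]]]; lia.
- by case: (U6 hU) => [[_ [h _]]|[_ [h _]]]; lia.
Qed.

Lemma UH_tproj P a : Ush P a -> tproj P Hor a (TH P).
Proof. by move=> hU; apply/(U1 _ _ hU). Qed.

Lemma share_UU P Q a : Ush P a -> Ush Q a -> share P Q ->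
  (lU P < rU Q /\ lU Q < rU P) \/
  (exists c, (c = lU P \/ c = rU P) /\ (c = lU Q \/ c = rU Q) /\
     ti_a (TV P c) < ti_b (TV Q c) /\ ti_a (TV Q c) < ti_b (TV P c)).
Proof.
move=> hP hQ [[o k g] [e1 e2]].
have [T1 [t1 [g1 g2]]] := edge_tproj e1.
have [T2 [t2 [g3 g4]]] := edge_tproj e2.
case: o t1 t2 e1 e2 => t1 t2 _ _.
- move/(U1 _ _ hP): t1 => [_ E1]; move/(U1 _ _ hQ): t2 => [_ E2]; subst.
  left; rewrite /lU /rU; lia.
- move/(U2 _ _ hP): t1 => [c1 E1]; move/(U2 _ _ hQ): t2 => [c2 E2]; subst.
  right; exists k; do 2 split => //; lia.
Qed.

Lemma share_ZU P Q a : Zsh P -> Ush Q a -> share P Q ->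
  (exists Tu, tproj P Hor a Tu /\ ti_a Tu < rU Q /\ lU Q < ti_b Tu) \/
  ((cZ P = lU Q \/ cZ P = rU Q) /\
     ti_a (TVz P) < ti_b (TV Q (cZ P)) /\ ti_a (TV Q (cZ P)) < ti_b (TVz P)).
Proof.
move=> hP hQ [[o k g] [e1 e2]].
have [T1 [t1 [g1 g2]]] := edge_tproj e1.
have [T2 [t2 [g3 g4]]] := edge_tproj e2.
case: o t1 t2 e1 e2 => t1 t2 _ _.
- move/(U1 _ _ hQ): t2 => [ek E2]; subst.
  left; exists T1; split => //; rewrite /lU /rU; lia.
- move/(Z1 _ _ hP): t1 => [ek E1]; move/(U2 _ _ hQ): t2 => [c2 E2]; subst.
  right; split => //; lia.
Qed.

Lemma share_sym P Q : share P Q -> share Q P.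
Proof. by move=> [e [h1 h2]]; exists e. Qed.

Lemma count_hor0 (s : seq tinterval) : (forall t, List.In t s -> ti_or t = Ver) ->
  count (fun t => is_hor (ti_or t)) s = 0%N.
Proof.
elim: s => [//|t s IH] h /=.
rewrite (h t (or_introl erefl)) IH //= => t' ht'; apply: h; by right.
Qed.

Lemma count_le (s : seq tinterval) (p : pred tinterval) : (count p s <= size s)%N.
Proof. exact: count_size. Qed.



Lemma H_family (V : finType) (P : V -> path2) (X : {set V}) a :
  X != set0 -> (forall v, v \in X -> Ush (P v) a) ->
  (forall v w, v \in X -> w \in X -> v <> w -> share (P v) (P w)) ->
  exists t, ti_or t = Hor /\ ti_line t = a /\ ti_wf t /\
   (exists2 v1, v1 \in X & ti_a t = lU (P v1)) /\
   (exists2 v2, v2 \in X & ti_b t = rU (P v2)) /\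
   (forall v, v \in X -> lU (P v) <= ti_a t /\ ti_b t <= rU (P v)) /\
   (forall v, v \in X -> ti_contains (TH (P v)) t) /\
   (forall d, (forall v, v \in X -> lU (P v) = ti_a t -> ti_x (TH (P v)) = d) -> ti_x t = d) /\
   (forall d, (forall v, v \in X -> rU (P v) = ti_b t -> ti_y (TH (P v)) = d) -> ti_y t = d).
Proof.
move=> hX hU hS.
apply: (@ti_family V X (fun v => TH (P v))) => //.
- by move=> v vX; apply: U3 (hU v vX).
- move=> v w vX wX /=.
  have [_ [_ h1]] := U3 (hU v vX); have [_ [_ h2]] := U3 (hU w wX).
  case: (v =P w) => [<-|ne]; first by rewrite /lU /rU in h1; lia.
  case: (share_UU (hU v vX) (hU w wX) (hS v w vX wX ne)) => [[o1 o2]|[c [hc1 [hc2 _]]]].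
  + rewrite /lU /rU in o1 o2; lia.
  + rewrite /lU /rU in h1 h2 hc1 hc2; lia.
- move=> v w vX wX /= e.
  have [_ [_ h1]] := U3 (hU v vX); have [_ [_ h2]] := U3 (hU w wX).
  change (lU (P v) = rU (P w)) in e.
  have ne : v <> w by move=> ew; subst w; lia.
  case: (share_UU (hU v vX) (hU w wX) (hS v w vX wX ne)) => [[o1 o2]|[c [hc1 [hc2 [ov1 ov2]]]]].
  + lia.
  + have ec1 : c = lU (P v) by lia.
    have ec2 : c = rU (P w) by lia.
    have ov1' : ti_a (TV (P v) (lU (P v))) < ti_b (TV (P w) (rU (P w))) by rewrite -ec1 -ec2.
    have ov2' : ti_a (TV (P w) (rU (P w))) < ti_b (TV (P v) (lU (P v))) by rewrite -ec1 -ec2.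
    case: (U5 (hU v vX)) => [[x1 [a1 _]]|[x1 [a1 _]]];
    case: (U6 (hU w wX)) => [[y1 [b1 _]]|[y1 [b1 _]]]; rewrite x1 y1 //; lia.
Qed.

Lemma V_family (V : finType) (P : V -> path2) (X : {set V}) a c :
  X != set0 -> (forall v, v \in X -> Ush (P v) a) ->
  (forall v w, v \in X -> w \in X -> v <> w -> share (P v) (P w)) ->
  (forall v, v \in X -> c = lU (P v) \/ c = rU (P v)) ->
  exists t, ti_or t = Ver /\ ti_line t = c /\ ti_wf t /\
   (exists2 v1, v1 \in X & ti_a t = ti_a (TV (P v1) c)) /\
   (exists2 v2, v2 \in X & ti_b t = ti_b (TV (P v2) c)) /\
   (forall v, v \in X -> ti_contains (TV (P v) c) t).
Proof.
move=> hX hU hS hc.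
have A1 : forall v, v \in X -> ti_or (TV (P v) c) = Ver /\ ti_line (TV (P v) c) = c /\
    ti_a (TV (P v) c) < ti_b (TV (P v) c).
  by move=> v vX; have [? [? [? _]]] := UV_props (hU v vX) (hc v vX).
have A2 : forall v w, v \in X -> w \in X -> ti_a (TV (P v) c) <= ti_b (TV (P w) c).
  move=> v w vX wX /=.
  have [_ [_ [_ [? _]]]] := UV_props (hU v vX) (hc v vX).
  have [_ [_ [_ [_ ?]]]] := UV_props (hU w wX) (hc w wX); lia.
have A3 : forall v w, v \in X -> w \in X -> ti_a (TV (P v) c) = ti_b (TV (P w) c) ->
    ti_x (TV (P v) c) = ti_y (TV (P w) c) /\ ti_x (TV (P v) c) <> TE.
  move=> v w vX wX /= e.
  have [_ [_ [n1 [p1 q1]]]] := UV_props (hU v vX) (hc v vX).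
  have [_ [_ [n2 [p2 q2]]]] := UV_props (hU w wX) (hc w wX).
  have ea : ti_a (TV (P v) c) = a by lia.
  have eb : ti_b (TV (P w) c) = a by lia.
  have ne : v <> w by move=> ew; subst w; lia.
  have [_ [_ l1]] := U3 (hU v vX); have [_ [_ l2]] := U3 (hU w wX).
  have tv : (c = lU (P v) /\ ti_x (TV (P v) c) = TU) \/ (c = rU (P v) /\ ti_x (TV (P v) c) = TD).
    case: (hc v vX) => ec; subst c.
    + left; split => //; case: (U5 (hU v vX)) => [[_ [_ ->]]|[_ [b1 _]]] //; lia.
    + right; split => //; case: (U6 (hU v vX)) => [[_ [_ ->]]|[_ [b1 _]]] //; lia.
  have tw : (c = lU (P w) /\ ti_y (TV (P w) c) = TU) \/ (c = rU (P w) /\ ti_y (TV (P w) c) = TD).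
    case: (hc w wX) => ec; subst c.
    + left; split => //; case: (U5 (hU w wX)) => [[_ [b1 _]]|[_ [_ ->]]] //; lia.
    + right; split => //; case: (U6 (hU w wX)) => [[_ [b1 _]]|[_ [_ ->]]] //; lia.
  have noS : ~ share (P v) (P w) -> False by move=> h; apply: h; exact: hS.
  case: tv => [[cv xv]|[cv xv]]; case: tw => [[cw yw]|[cw yw]]; rewrite ?xv ?yw //.
  + exfalso; case: (share_UU (hU v vX) (hU w wX) (hS v w vX wX ne)) =>
      [[o1 o2]|[c' [hc1 [hc2 [ov1 ov2]]]]]; first lia.
    have ec : c' = c by lia.
    by move: ov1; rewrite ec; lia.
  + exfalso; case: (share_UU (hU v vX) (hU w wX) (hS v w vX wX ne)) =>
      [[o1 o2]|[c' [hc1 [hc2 [ov1 ov2]]]]]; first lia.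
    have ec : c' = c by lia.
    by move: ov1; rewrite ec; lia.
have [t [h1 [h2 [h3 [h4 [h5 [_ [h7 _]]]]]]]] :=
  @ti_family V X (fun v => TV (P v) c) Ver c hX A1 A2 A3.
by exists t.
Qed.



Lemma vopt (V : finType) (P : V -> path2) (X : {set V}) a c :
  X != set0 -> (forall v, v \in X -> Ush (P v) a) ->
  (forall v w, v \in X -> w \in X -> v <> w -> share (P v) (P w)) ->
  exists Sc : seq tinterval, (size Sc <= 1)%N /\
    (forall t, List.In t Sc -> ti_or t = Ver /\ ti_wf t /\
        forall v, v \in X -> v_contains (P v) t) /\
    ((forall v, v \in X -> c = lU (P v) \/ c = rU (P v)) ->
      exists t, List.In t Sc /\ ti_or t = Ver /\ ti_line t = c /\
        forall T, ti_or T = Ver -> ti_line T = c -> ti_a T < ti_b T ->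
          (forall v, v \in X -> ti_a T < ti_b (TV (P v) c) /\ ti_a (TV (P v) c) < ti_b T) ->
          ti_intersects T t).
Proof.
move=> hX hU hS.
case: (classic (forall v, v \in X -> c = lU (P v) \/ c = rU (P v))) => hc; last first.
  by exists [::]; split => //; split => //.
have [t [h1 [h2 [h3 [[v1 v1X e1] [[v2 v2X e2] h6]]]]]] := V_family hX hU hS hc.
exists [:: t]; split => //; split.
- move=> t' [<-|//]; do 2 split => //.
  move=> v vX; have tp := UV_tproj (hU v vX) (hc v vX).
  rewrite /v_contains h1 h2; split; first exact: tproj_il tp.
  by exists (TV (P v) c); split => //; apply: h6.
- move=> _; exists t; split; first by left.
  split => //; split => //.
  move=> T o1 l1 nd hov.
  apply: ovl1d => //.
  + by split; [rewrite h1|rewrite h2].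
  + by rewrite e2; case: (hov v2 v2X).
  + by rewrite e1; case: (hov v1 v1X).
Qed.

Theorem lemma11 (V : finType) (E : rel V) (P : V -> path2)
  (hP : forall v, two_bend_path (P v))
  (hE : forall u v, E u v <-> (u <> v /\ share (P u) (P v)))
  (a : int) (X : {set V})
  (hX0 : X != set0)
  (hXcl : forall u v, u \in X -> v \in X -> u <> v -> E u v)
  (hXU : forall u, u \in X -> U_vertex (P u) /\ index_is_single (P u) a) :
  exists S : seq tinterval,
    (size S <= 3)%N /\
    (forall t, List.In t S -> ti_wf t) /\
    count (fun t => is_hor (ti_or t)) S = 1%N /\
    (forall t, List.In t S -> ti_or t = Hor -> ti_line t = a) /\
    (count (fun t => is_ver (ti_or t)) S <= 2)%N /\
    (forall v t, v \in X -> List.In t S -> v_contains (P v) t) /\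
    (forall u, Z_vertex (P u) ->
       ((forall v, v \in X -> E u v) <->
        (exists t, List.In t S /\ v_intersects (P u) t))).
Proof.
have hU : forall v, v \in X -> Ush (P v) a.
  by move=> v vX; apply: Ushape_of (hP v) (hXU v vX).2.
have hS : forall v w, v \in X -> w \in X -> v <> w -> share (P v) (P w).
  by move=> v w vX wX ne; case/hE: (hXcl v w vX wX ne).
have [v0 v0X] : exists v0, v0 \in X by apply/set0Pn.
have [tH [hH1 [hH2 [hH3 [[v1 v1X e1] [[v2 v2X e2] [hHb [hHc [hHx hHy]]]]]]]]] :=
  H_family hX0 hU hS.
have [Sl [sl1 [sl2 sl3]]] := vopt (lU (P v0)) hX0 hU hS.
have [Sr [sr1 [sr2 sr3]]] := vopt (rU (P v0)) hX0 hU hS.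
have inS : forall t, List.In t (tH :: Sl ++ Sr) -> t = tH \/ List.In t Sl \/ List.In t Sr.
  move=> t /= [<-|]; [by left|by rewrite List.in_app_iff; right].
have verS : forall t, List.In t (Sl ++ Sr) -> ti_or t = Ver.
  by move=> t; rewrite List.in_app_iff => -[/sl2|/sr2] [].
exists (tH :: Sl ++ Sr).
split; first by rewrite /= size_cat; lia.
split.
  by move=> t /inS [->|[/sl2|/sr2]] // [_ []].
split; first by rewrite /= hH1 count_hor0.
split.
  by move=> t /inS [->|[/sl2|/sr2]] //; move=> [-> _].
split.
  rewrite /= hH1 /= add0n; apply: leq_trans (count_size _ _) _; rewrite size_cat; lia.
split.
  move=> v t vX /inS [->|[/sl2|/sr2]]; last 2 first.
  - by move=> [_ [_ /(_ v vX)]].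
  - by move=> [_ [_ /(_ v vX)]].
  rewrite /v_contains hH1 hH2; split; first exact: tproj_il (UH_tproj (hU v vX)).
  by exists (TH (P v)); split; [apply: UH_tproj (hU v vX)|apply: hHc].
move=> u hZ.
have hZs := Zshape_of (hP u) hZ.
have uneq : forall v, v \in X -> u <> v.
  by move=> v vX e; subst v; apply: (Z5 hZs); exact: (hXU u vX).2.
split; last first.
  move=> [t [tS ti]] v vX; apply/hE; split; first exact: uneq.
  apply: share_sym; apply: (contains_inter_share (hP v) (hP u) _ ti).
  move: tS => /inS [->|[/sl2|/sr2]]; last 2 first.
  - by move=> [_ [_ /(_ v vX)]].
  - by move=> [_ [_ /(_ v vX)]].
  rewrite /v_contains hH1 hH2; split; first exact: tproj_il (UH_tproj (hU v vX)).
  by exists (TH (P v)); split; [apply: UH_tproj (hU v vX)|apply: hHc].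
move=> hadj.
have hSu : forall v, v \in X -> share (P u) (P v).
  by move=> v vX; case/hE: (hadj v vX).
have hTVz : tproj (P u) Ver (cZ (P u)) (TVz (P u)) by apply/(Z1 _ _ hZs).
have [oz [lz ndz]] := tproj_nd hTVz.
case: (classic (exists Tu, tproj (P u) Hor a Tu)) => [[Tu hTu]|noH].
- have [ou [lu ndu]] := tproj_nd hTu.
  case: (classic (forall v, v \in X -> ti_a Tu < rU (P v) /\ lU (P v) < ti_b Tu))
    => [allov|notall].
  + exists tH; split; first by left.
    split; first by rewrite hH1 hH2; exact: tproj_il hTu.
    exists Tu; rewrite hH1 hH2; split => //.
    apply: ovl1d => //.
    * by split; rewrite ?hH1 ?hH2.
    * by rewrite e2; case: (allov v2 v2X).
    * by rewrite e1; case: (allov v1 v1X).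
  + have [w wX nw] : exists2 w, w \in X & ~ (ti_a Tu < rU (P w) /\ lU (P w) < ti_b Tu).
      apply: NNPP => hn; apply: notall => v vX; apply: NNPP => hv; apply: hn; by exists v.
    have NO : forall v, v \in X -> ~ (ti_a Tu < rU (P v) /\ lU (P v) < ti_b Tu) ->
        (cZ (P u) = lU (P v) \/ cZ (P u) = rU (P v)) /\
        ti_a (TVz (P u)) < ti_b (TV (P v) (cZ (P u))) /\
        ti_a (TV (P v) (cZ (P u))) < ti_b (TVz (P u)).
      move=> v vX nv; case: (share_ZU hZs (hU v vX) (hSu v vX)) => [[Tu' [hTu' ov]]|h] //.
      by exfalso; apply: nv; rewrite (Z2 hZs hTu hTu').
    have [d [dnTE [orient dir]]] := Z4 hZs hTu.
    case: orient => [[eb [ey ex]]|[ea [ex ey]]].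
    * have C1 : forall v, v \in X -> ~ (ti_a Tu < rU (P v) /\ lU (P v) < ti_b Tu) ->
          cZ (P u) = lU (P v) /\ ti_x (TH (P v)) = d.
        move=> v vX nv; have [hc [o1 o2]] := NO v vX nv.
        have [_ [_ lr]] := U3 (hU v vX).
        have ec : cZ (P u) = lU (P v).
          case: hc => // ec; exfalso; apply: nv; split; lia.
        split => //; rewrite ec in o1 o2.
        case: (U5 (hU v vX)) => [[x1 [a1 _]]|[x1 [a1 _]]];
        case: dir => [[dU aZ]|[dD bZ]]; rewrite x1 ?dU ?dD //; lia.
      have [e0 _] := C1 w wX nw.
      have [bw _] := hHb w wX.
      have nv1 : ~ (ti_a Tu < rU (P v1) /\ lU (P v1) < ti_b Tu) by move=> [_ h]; lia.
      have [e1' _] := C1 v1 v1X nv1.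
      have xd : ti_x tH = d.
        apply: hHx => v vX ev; apply: (C1 v vX _).2; move=> [_ h]; lia.
      exists tH; split; first by left.
      split; first by rewrite hH1 hH2; exact: tproj_il hTu.
      exists Tu; split; first by rewrite hH1 hH2.
      split; first by split; rewrite ?hH1 ?hH2.
      right; right; exists Rgt; rewrite /coherent /=.
      right; right; split; first by rewrite ey.
      left; split; [by rewrite ey xd | lia].
    * have C1 : forall v, v \in X -> ~ (ti_a Tu < rU (P v) /\ lU (P v) < ti_b Tu) ->
          cZ (P u) = rU (P v) /\ ti_y (TH (P v)) = d.
        move=> v vX nv; have [hc [o1 o2]] := NO v vX nv.
        have [_ [_ lr]] := U3 (hU v vX).
        have ec : cZ (P u) = rU (P v).
          case: hc => // ec; exfalso; apply: nv; split; lia.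
        split => //; rewrite ec in o1 o2.
        case: (U6 (hU v vX)) => [[x1 [a1 _]]|[x1 [a1 _]]];
        case: dir => [[dU aZ]|[dD bZ]]; rewrite x1 ?dU ?dD //; lia.
      have [e0 _] := C1 w wX nw.
      have [_ bw] := hHb w wX.
      have nv2 : ~ (ti_a Tu < rU (P v2) /\ lU (P v2) < ti_b Tu) by move=> [h _]; lia.
      have [e2' _] := C1 v2 v2X nv2.
      have yd : ti_y tH = d.
        apply: hHy => v vX ev; apply: (C1 v vX _).2; move=> [h _]; lia.
      exists tH; split; first by left.
      split; first by rewrite hH1 hH2; exact: tproj_il hTu.
      exists Tu; split; first by rewrite hH1 hH2.
      split; first by split; rewrite ?hH1 ?hH2.
      right; right; exists Lft; rewrite /coherent /=.
      right; right; split; first by rewrite ex.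
      right; split; [by rewrite ex yd | lia].
- have com : forall v, v \in X -> (cZ (P u) = lU (P v) \/ cZ (P u) = rU (P v)) /\
        ti_a (TVz (P u)) < ti_b (TV (P v) (cZ (P u))) /\
        ti_a (TV (P v) (cZ (P u))) < ti_b (TVz (P u)).
    move=> v vX; case: (share_ZU hZs (hU v vX) (hSu v vX)) => [[Tu [hTu _]]|h] //.
    by exfalso; apply: noH; exists Tu.
  case: (com v0 v0X) => [[e|e] _].
  + have [t [tin [to [tl tint]]]] := sl3 ltac:(move=> v vX; rewrite -e; exact: (com v vX).1).
    exists t; split; first by right; apply/List.in_app_iff; left.
    rewrite /v_intersects to tl -e; split; first exact: tproj_il hTVz.
    exists (TVz (P u)); split => //.
    apply: tint => //; first by rewrite lz e.
    by move=> v vX; rewrite -e; exact: (com v vX).2.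
  + have [t [tin [to [tl tint]]]] := sr3 ltac:(move=> v vX; rewrite -e; exact: (com v vX).1).
    exists t; split; first by right; apply/List.in_app_iff; right.
    rewrite /v_intersects to tl -e; split; first exact: tproj_il hTVz.
    exists (TVz (P u)); split => //.
    apply: tint => //; first by rewrite lz e.
    by move=> v vX; rewrite -e; exact: (com v vX).2.
Qed.
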